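(* Let $b\in(0,1)$, $\phi\in(0,1)$ and $h_G>1$. Consider the set of solutions $(x,y)$ with $\tfrac12\le y\le x\le1$ of the system $$x=\frac{x^b(h_Gy+1-y)}{x^b(h_Gy+1-y)+(1-x)^b(y+h_G-h_Gy)},\qquad y=\phi x+\frac{1-\phi}{h_G+1}(h_Gy+1-y).$$ Let $\mathcal S=\{(\tfrac12,\tfrac12),\,(1,\frac{\phi h_G+1}{\phi h_G+2-\phi})\}$. If $0<b\le\frac{2}{\phi(h_G-1)+2}$, the solution set is $\mathcal S$; otherwise (i.e. $\frac{2}{\phi(h_G-1)+2}<b<1$) the solution set is $\mathcal S\cup\{(\hat x(\phi,h_G,b),\frac{\phi(h_G+1)\hat x(\phi,h_G,b)+1-\phi}{\phi h_G+2-\phi})\}$.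
   Context: For $0<b<1$ define $g(x,b)=\frac{x^{1-b}-(1-x)^{1-b}}{x(1-x)^{1-b}-(1-x)x^{1-b}}$ for $x\in(\tfrac12,1)$ and $g(\tfrac12,b)=\frac2b-2$. When $\frac{2}{\phi(h_G-1)+2}<b<1$, $\hat x(\phi,h_G,b)$ denotes the unique solution $x\in(\tfrac12,1)$ of $g(x,b)=\phi(h_G-1)$. *)

(* Defs.v *)
(* R : realType, real powers via powR (0 `^ b = 0 for b <> 0). *)
From HB Require Import structures.
From mathcomp Require Import all_boot all_order all_algebra.
From mathcomp Require Import all_classical all_reals all_analysis.
Set Implicit Arguments. Unset Strict Implicit. Unset Printing Implicit Defensive.
Import Order.TTheory GRing.Theory Num.Theory.
Local Open Scope ring_scope.
Local Open Scope classical_set_scope.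

Definition gfun {R : realType} (x b : R) : R :=
  if x == 2^-1 then 2 / b - 2
  else (x `^ (1 - b) - (1 - x) `^ (1 - b)) /
       (x * (1 - x) `^ (1 - b) - (1 - x) * x `^ (1 - b)).

Definition xhat {R : realType} (phi hG b : R) : R :=
  xget 0 [set x : R | 2^-1 < x < 1 /\ gfun x b = phi * (hG - 1)].

Definition solset {R : realType} (b phi hG : R) : set (R * R) :=
  [set p : R * R | let x := p.1 in let y := p.2 in
     [/\ 2^-1 <= y, y <= x, x <= 1,
         x = x `^ b * (hG * y + 1 - y) /
             (x `^ b * (hG * y + 1 - y) + (1 - x) `^ b * (y + hG - hG * y))
       & y = phi * x + (1 - phi) / (hG + 1) * (hG * y + 1 - y)]].

Definition Sset {R : realType} (phi hG : R) : set (R * R) :=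
  [set (2^-1, 2^-1); (1, (phi * hG + 1) / (phi * hG + 2 - phi))].

(* Main.v *)
Require Import Defs.
From HB Require Import structures.
From mathcomp Require Import all_boot all_order all_algebra.
From mathcomp Require Import all_classical all_reals all_analysis.
From mathcomp Require Import ring lra.
Import Order.TTheory GRing.Theory Num.Theory.
Local Open Scope ring_scope.
Local Open Scope classical_set_scope.




Lemma is_derive_aff {R : realType} (p q x : R) : is_derive x 1 (fun y => p + q * y) q.
Proof.
have H1 : is_derive x (1:R) (fun y : R => y) 1 := is_derive_id x 1.
have H2 := is_deriveZ q H1.
have H3 := is_deriveD (is_derive_cst p x 1) H2.
move: H3; set F := (X in is_derive _ _ X _) => H3.
have EF : F = (fun y : R => p + q * y) by apply/funext => y; rewrite /F /=.
rewrite EF in H3; apply: (is_derive_eq H3).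
by rewrite add0r; rewrite /GRing.scale /=; rewrite mulr1.
Qed.

Lemma is_derive_lnaff {R : realType} (p q x : R) : 0 < p + q * x ->
  is_derive x 1 (fun y => ln (p + q * y)) (q / (p + q * x)).
Proof.
move=> hp.
have h1 := is_derive1_ln hp.
have := @is_derive1_comp R (@ln R) (fun y => p + q * y) x _ _ h1 (is_derive_aff p q x).
by move=> H; apply: (is_derive_eq H); rewrite mulrC.
Qed.




Definition DD {R : realType} (phi h : R) := phi * h + 2 - phi.
Definition Yf {R : realType} (phi h x : R) := (phi * (h + 1) * x + 1 - phi) / DD phi h.
Definition Af {R : realType} (phi h x : R) := h * Yf phi h x + 1 - Yf phi h x.
Definition Bf {R : realType} (phi h x : R) := Yf phi h x + h - h * Yf phi h x.
Definition qA {R : realType} (phi h : R) := (h - 1) * phi * (h + 1) / DD phi h.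
Definition pA {R : realType} (phi h : R) := 1 + (h - 1) * (1 - phi) / DD phi h.
Definition pB {R : realType} (phi h : R) := h - (h - 1) * (1 - phi) / DD phi h.
Definition Ef {R : realType} (a phi h x : R) :=
  a * Af phi h x * Bf phi h x - qA phi h * (h + 1) * (x * (1 - x)).
Definition c0 {R : realType} (a phi h : R) := (h + 1) / 4 * (a * (h + 1) - qA phi h).
Definition c2 {R : realType} (a phi h : R) := qA phi h * ((h + 1) - a * qA phi h).

Lemma DD_gt0 {R : realType} (phi h : R) : 0 < phi < 1 -> 1 < h -> 0 < DD phi h.
Proof. rewrite /DD => /andP[p0 p1] h1; nra. Qed.

Lemma YfD {R : realType} (phi h x : R) : 0 < phi < 1 -> 1 < h ->
  Yf phi h x * DD phi h = phi * (h + 1) * x + 1 - phi.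
Proof.
move=> hp hh; have D0 := DD_gt0 phi h hp hh.
by rewrite /Yf mulrVK // unitfE gt_eqF.
Qed.

Lemma Yf_bounds {R : realType} (phi h x : R) : 0 < phi < 1 -> 1 < h -> 0 <= x <= 1 ->
  0 < Yf phi h x < 1.
Proof.
move=> hp hh /andP[x0 x1]; have D0 := DD_gt0 phi h hp hh.
have E := YfD phi h x hp hh; move: E D0; rewrite /DD.
case/andP: hp => p0 p1.
set y := Yf phi h x => E D0.
have H1 : 0 <= phi * (h + 1) * (1 - x) by rewrite !mulr_ge0 //; lra.
have H2 : 0 <= phi * (h + 1) * x by rewrite !mulr_ge0 //; lra.
apply/andP; split; nra.
Qed.

Lemma Af_gt0 {R : realType} (phi h x : R) : 0 < phi < 1 -> 1 < h -> 0 <= x <= 1 -> 0 < Af phi h x.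
Proof. move=> hp hh hx; have := Yf_bounds phi h x hp hh hx; rewrite /Af; set y := Yf _ _ _; nra. Qed.

Lemma Bf_gt0 {R : realType} (phi h x : R) : 0 < phi < 1 -> 1 < h -> 0 <= x <= 1 -> 0 < Bf phi h x.
Proof. move=> hp hh hx; have := Yf_bounds phi h x hp hh hx; rewrite /Bf; set y := Yf _ _ _; nra. Qed.

Lemma Af_aff {R : realType} (phi h x : R) : 0 < phi < 1 -> 1 < h -> Af phi h x = pA phi h + qA phi h * x.
Proof.
move=> hp hh; have D0 := DD_gt0 phi h hp hh.
rewrite /Af /pA /qA /Yf; field; by rewrite gt_eqF.
Qed.

Lemma Bf_aff {R : realType} (phi h x : R) : 0 < phi < 1 -> 1 < h -> Bf phi h x = pB phi h + (- qA phi h) * x.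
Proof.
move=> hp hh; have D0 := DD_gt0 phi h hp hh.
rewrite /Bf /pB /qA /Yf; field; by rewrite gt_eqF.
Qed.

Lemma AB_sum {R : realType} (phi h x : R) : Af phi h x + Bf phi h x = h + 1.
Proof. rewrite /Af /Bf; ring. Qed.

Lemma Ef_id {R : realType} (a phi h x : R) : 0 < phi < 1 -> 1 < h ->
  Ef a phi h x = c0 a phi h + c2 a phi h * (x - 2^-1) ^+ 2.
Proof.
move=> hp hh; have D0 := DD_gt0 phi h hp hh.
move: D0; rewrite /Ef /c0 /c2 /Af /Bf /qA /Yf /DD => D0.
field; by rewrite gt_eqF.
Qed.

Lemma qA_bounds {R : realType} (phi h : R) : 0 < phi < 1 -> 1 < h -> 0 < qA phi h < h + 1.
Proof.
move=> hp hh; have D0 := DD_gt0 phi h hp hh.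
have E : qA phi h * DD phi h = (h - 1) * phi * (h + 1).
  by rewrite /qA mulrVK // unitfE gt_eqF.
move: E D0; rewrite /DD; case/andP: hp => p0 p1; set q := qA _ _ => E D0.
have E2 : (h + 1 - q) * (phi * h + 2 - phi) = 2 * (h + 1).
  by rewrite mulrBl E; ring.
have E3 : 0 < (h - 1) * phi * (h + 1) by rewrite !mulr_gt0 //; lra.
apply/andP; split.
  by rewrite -(pmulr_lgt0 _ D0) E.
by rewrite -subr_gt0 -(pmulr_lgt0 _ D0) E2; lra.
Qed.

Lemma c2_gt0 {R : realType} (a phi h : R) : 0 < a < 1 -> 0 < phi < 1 -> 1 < h -> 0 < c2 a phi h.
Proof.
move=> /andP[a0 a1] hp hh; have := qA_bounds phi h hp hh; rewrite /c2; set q := qA _ _.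
move=> /andP[q0 q1]; apply: mulr_gt0 => //; nra.
Qed.

Lemma c0_sign {R : realType} (a b phi h : R) : a = 1 - b -> 0 < phi < 1 -> 1 < h ->
  (0 <= c0 a phi h) = (b <= 2 / (phi * (h - 1) + 2)).
Proof.
move=> -> hp hh; have D0 := DD_gt0 phi h hp hh.
have E : phi * (h - 1) + 2 = DD phi h by rewrite /DD; ring.
rewrite E /c0 /qA.
rewrite pmulr_rge0; last by rewrite divr_gt0 //; lra.
rewrite subr_ge0 ler_pdivrMr // ler_pdivlMr //.
apply/idP/idP; rewrite /DD in D0 *; case/andP: hp => p0 p1; nra.
Qed.





Definition Lf {R : realType} (a phi h x : R) :=
  a * ln x - a * ln (1 - x) + ln (Bf phi h x) - ln (Af phi h x).
Definition dLf {R : realType} (a phi h x : R) :=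
  a / x + a / (1 - x) - qA phi h / Bf phi h x - qA phi h / Af phi h x.

Lemma is_derive_Lf {R : realType} (a phi h x : R) : 0 < phi < 1 -> 1 < h -> 0 < x < 1 ->
  is_derive x 1 (Lf a phi h) (dLf a phi h x).
Proof.
move=> hp hh /andP[x0 x1].
have hx : 0 <= x <= 1 by apply/andP; split; lra.
have HA := Af_gt0 phi h x hp hh hx; have HB := Bf_gt0 phi h x hp hh hx.
have H1 := @is_derive_lnaff R 0 1 x ltac:(lra).
have H2 := @is_derive_lnaff R 1 (-1) x ltac:(lra).
have H3 := @is_derive_lnaff R (pB phi h) (- qA phi h) x ltac:(by rewrite -Bf_aff).
have H4 := @is_derive_lnaff R (pA phi h) (qA phi h) x ltac:(by rewrite -Af_aff).
have H := is_deriveB (is_deriveD (is_deriveB (is_deriveZ a H1) (is_deriveZ a H2)) H3) H4.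
move: H; set F := (X in is_derive _ _ X _) => H.
have EF : F = Lf a phi h.
  apply/funext => y; rewrite /F /Lf !fctE /= -Af_aff // -Bf_aff //.
  by rewrite add0r mul1r mulN1r.
rewrite EF in H; apply: (is_derive_eq H).
rewrite -Af_aff // -Bf_aff // /dLf add0r mul1r mulN1r.
have sE : forall u v : R, u *: v = u * v by [].
change (a * (1 * x)^-1 - a * - (1 + -1 * x)^-1 + - qA phi h / Bf phi h x -
  qA phi h / Af phi h x = a / x + a / (1 - x) - qA phi h / Bf phi h x - qA phi h / Af phi h x).
rewrite mul1r mulN1r; ring.
Qed.



Lemma Lf_mvt {R : realType} (a phi h p q : R) : 0 < phi < 1 -> 1 < h ->
  0 < p -> p < q -> q < 1 ->
  exists2 c, p < c < q & Lf a phi h q - Lf a phi h p = dLf a phi h c * (q - p).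
Proof.
move=> hp hh p0 pq q1.
have der : forall z, p <= z <= q -> is_derive z 1 (Lf a phi h) (dLf a phi h z).
  by move=> z /andP[? ?]; apply: is_derive_Lf => //; apply/andP; split; lra.
have [c cI E] := MVT pq (fun z zI => der z
    ltac:(move: zI; rewrite in_itv /= => /andP[? ?]; apply/andP; split; lra))
  ltac:(apply: derivable_within_continuous => z;
        rewrite in_itv /= => /andP[pz zq];
        by case: (der z ltac:(apply/andP; split; lra))).
by exists c => //; move: cI; rewrite in_itv.
Qed.

Lemma dLf_E {R : realType} (a phi h x : R) : 0 < phi < 1 -> 1 < h -> 0 < x < 1 ->
  dLf a phi h x = Ef a phi h x / (x * (1 - x) * Af phi h x * Bf phi h x).
Proof.
move=> hp hh /andP[x0 x1].
have hx : 0 <= x <= 1 by apply/andP; split; lra.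
have HA := Af_gt0 phi h x hp hh hx; have HB := Bf_gt0 phi h x hp hh hx.
have S := AB_sum phi h x.
rewrite /dLf /Ef -S; field.
by rewrite !gt_eqF // subr_gt0.
Qed.

Lemma Yf_half {R : realType} (phi h : R) : 0 < phi < 1 -> 1 < h -> Yf phi h 2^-1 = 2^-1.
Proof.
move=> hp hh; have D0 := DD_gt0 phi h hp hh; move: D0.
rewrite /Yf /DD => D0; field; rewrite gt_eqF //.
Qed.

Lemma Lf_half {R : realType} (a phi h : R) : 0 < phi < 1 -> 1 < h -> Lf a phi h 2^-1 = 0.
Proof.
move=> hp hh; rewrite /Lf /Af /Bf Yf_half //.
have -> : 1 - 2^-1 = 2^-1 :> R by field.
have -> : 2^-1 + h - h * 2^-1 = h * 2^-1 + 1 - 2^-1 :> R by field.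
ring.
Qed.

Lemma Lf_eq {R : realType} (a phi h x : R) : 0 < phi < 1 -> 1 < h -> 0 < x < 1 ->
  Lf a phi h x = ln (x `^ a * Bf phi h x) - ln ((1 - x) `^ a * Af phi h x).
Proof.
move=> hp hh /andP[x0 x1].
have hx : 0 <= x <= 1 by apply/andP; split; lra.
have HA := Af_gt0 phi h x hp hh hx; have HB := Bf_gt0 phi h x hp hh hx.
have x1' : 0 < 1 - x by lra.
rewrite /Lf !lnM ?posrE ?powR_gt0 // !ln_powR; ring.
Qed.

Lemma Lf0_iff {R : realType} (a phi h x : R) : 0 < phi < 1 -> 1 < h -> 0 < x < 1 ->
  (Lf a phi h x = 0) <-> (x `^ a * Bf phi h x = (1 - x) `^ a * Af phi h x).
Proof.
move=> hp hh hx; rewrite Lf_eq //; case/andP: (hx) => x0 x1.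
have hx' : 0 <= x <= 1 by apply/andP; split; lra.
have HA := Af_gt0 phi h x hp hh hx'; have HB := Bf_gt0 phi h x hp hh hx'.
have x1' : 0 < 1 - x by lra.
split.
  move/eqP; rewrite subr_eq0 => /eqP; apply: ln_inj; rewrite posrE mulr_gt0 ?powR_gt0 //.
by move=> ->; rewrite subrr.
Qed.

Lemma Lf_gt0_iff {R : realType} (a phi h x : R) : 0 < phi < 1 -> 1 < h -> 0 < x < 1 ->
  (0 < Lf a phi h x) = ((1 - x) `^ a * Af phi h x < x `^ a * Bf phi h x).
Proof.
move=> hp hh hx; rewrite Lf_eq //; case/andP: (hx) => x0 x1.
have hx' : 0 <= x <= 1 by apply/andP; split; lra.
have HA := Af_gt0 phi h x hp hh hx'; have HB := Bf_gt0 phi h x hp hh hx'.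
have x1' : 0 < 1 - x by lra.
by rewrite subr_gt0 ltr_ln // posrE mulr_gt0 ?powR_gt0.
Qed.



Lemma crit_E {R : realType} (a phi h p q : R) : 0 < phi < 1 -> 1 < h ->
  0 < p -> p < q -> q < 1 -> Lf a phi h p = Lf a phi h q ->
  exists2 c, p < c < q & Ef a phi h c = 0.
Proof.
move=> hp hh p0 pq q1 E.
have [c /andP[pc cq] Ec] := Lf_mvt a phi h p q hp hh p0 pq q1.
exists c; first by apply/andP.
have c01 : 0 < c < 1 by apply/andP; split; lra.
have hx : 0 <= c <= 1 by apply/andP; split; lra.
have HA := Af_gt0 phi h c hp hh hx; have HB := Bf_gt0 phi h c hp hh hx.
have D : 0 < c * (1 - c) * Af phi h c * Bf phi h c.
  by rewrite !mulr_gt0 //; lra.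
have qp : 0 < q - p by lra.
move: Ec; rewrite E subrr dLf_E // => /esym /eqP.
rewrite mulf_eq0 (gt_eqF qp) orbF mulf_eq0 invr_eq0 (gt_eqF D) orbF.
by move/eqP.
Qed.

Lemma no_sol {R : realType} (a phi h x : R) : 0 < a < 1 -> 0 < phi < 1 -> 1 < h ->
  0 <= c0 a phi h -> 2^-1 < x < 1 -> Lf a phi h x = 0 -> False.
Proof.
move=> ha hp hh c0p /andP[x0 x1] Lx.
have h0 : (0:R) < 2^-1 by rewrite invr_gt0 ltr0n.
have [c /andP[c1 c2'] Ec] := crit_E a phi h (2^-1) x hp hh h0 x0 x1
  ltac:(by rewrite Lf_half // Lx).
move: Ec; rewrite Ef_id //.
have := c2_gt0 a phi h ha hp hh.
move=> C2p.
have : 0 < (c - 2^-1) ^+ 2 by rewrite exprn_gt0 // subr_gt0.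
move=> H E; have : 0 < c2 a phi h * (c - 2^-1) ^+ 2 by rewrite mulr_gt0.
lra.
Qed.

Lemma uniq_sol_lt {R : realType} (a phi h x y : R) : 0 < a < 1 -> 0 < phi < 1 -> 1 < h ->
  2^-1 < x -> x < y -> y < 1 -> Lf a phi h x = 0 -> Lf a phi h y = 0 -> False.
Proof.
move=> ha hp hh x0 xy y1 Lx Ly.
have h0 : (0:R) < 2^-1 by rewrite invr_gt0 ltr0n.
have [c /andP[c1 c2'] Ec] := crit_E a phi h (2^-1) x hp hh h0 x0 ltac:(lra)
  ltac:(by rewrite Lf_half // Lx).
have [d /andP[d1 d2'] Ed] := crit_E a phi h x y hp hh ltac:(lra) xy y1
  ltac:(by rewrite Lx Ly).
move: Ec Ed; rewrite !Ef_id // => Ec Ed.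
have C2p := c2_gt0 a phi h ha hp hh.
have : (c - 2^-1) ^+ 2 < (d - 2^-1) ^+ 2.
  rewrite ltr_pXn2r // ?nnegrE; lra.
move=> H; have : c2 a phi h * (c - 2^-1) ^+ 2 < c2 a phi h * (d - 2^-1) ^+ 2.
  by rewrite ltr_pM2l.
lra.
Qed.

Lemma uniq_sol {R : realType} (a phi h x y : R) : 0 < a < 1 -> 0 < phi < 1 -> 1 < h ->
  2^-1 < x < 1 -> 2^-1 < y < 1 -> Lf a phi h x = 0 -> Lf a phi h y = 0 -> x = y.
Proof.
move=> ha hp hh /andP[x0 x1] /andP[y0 y1] Lx Ly.
case: (ltgtP x y) => // xy.
  by case: (uniq_sol_lt a phi h x y ha hp hh x0 xy y1 Lx Ly).
by case: (uniq_sol_lt a phi h y x ha hp hh y0 xy x1 Ly Lx).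
Qed.



Lemma Af_le {R : realType} (phi h x : R) : 0 < phi < 1 -> 1 < h -> 0 <= x <= 1 ->
  Af phi h x <= h.
Proof. move=> hp hh hx; have := Yf_bounds phi h x hp hh hx; rewrite /Af; set y := Yf _ _ _; nra. Qed.

Lemma Bf_ge {R : realType} (phi h x : R) : 0 < phi < 1 -> 1 < h -> 0 <= x <= 1 ->
  1 <= Bf phi h x.
Proof. move=> hp hh hx; have := Yf_bounds phi h x hp hh hx; rewrite /Bf; set y := Yf _ _ _; nra. Qed.

Lemma neg_point {R : realType} (a phi h : R) : 0 < a < 1 -> 0 < phi < 1 -> 1 < h ->
  c0 a phi h < 0 -> exists x0, [/\ 2^-1 < x0, x0 <= 2^-1 + 8^-1 & Lf a phi h x0 < 0].
Proof.
move=> ha hp hh c0n.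
have C2p := c2_gt0 a phi h ha hp hh.
set s := - c0 a phi h / (8 * c2 a phi h).
have sE : c2 a phi h * s = - c0 a phi h / 8.
  by rewrite /s; field; rewrite gt_eqF.
have sp : 0 < s by rewrite /s divr_gt0 //; [lra| rewrite mulr_gt0].
set t0 := Num.min (8^-1) s.
have t0p : 0 < t0 by rewrite /t0 lt_min invr_gt0 ltr0n /= sp.
have t01 : t0 <= 8^-1 by rewrite /t0 ge_min lexx.
have t02 : t0 <= s by rewrite /t0 ge_min lexx orbT.
have t03 : c2 a phi h * t0 <= - c0 a phi h / 8.
  by rewrite -sE ler_pM2l.
have t04 : c2 a phi h * t0 ^+ 2 < - c0 a phi h.
  have : c2 a phi h * t0 ^+ 2 <= (- c0 a phi h / 8) * 8^-1.
    rewrite expr2 mulrA; apply: ler_pM; [by rewrite mulr_ge0 // ltW | exact: ltW | exact: t03 | exact: t01].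
  lra.
have h2 : (0:R) < 2^-1 by rewrite invr_gt0 ltr0n.
have h8 : (8:R)^-1 = 2^-1 * 2^-1 * 2^-1 by field.
have [c /andP[c1 c2'] Ec] := Lf_mvt a phi h (2^-1) (2^-1 + t0) hp hh h2 ltac:(lra) ltac:(lra).
exists (2^-1 + t0); split; [lra|lra|].
move: Ec; rewrite Lf_half // subr0 addrAC subrr add0r.
have c01 : 0 < c < 1 by apply/andP; split; lra.
rewrite dLf_E //.
have hx : 0 <= c <= 1 by apply/andP; split; lra.
have HA := Af_gt0 phi h c hp hh hx; have HB := Bf_gt0 phi h c hp hh hx.
have D : 0 < c * (1 - c) * Af phi h c * Bf phi h c.
  by rewrite !mulr_gt0 //; lra.
have En : Ef a phi h c < 0.
  rewrite Ef_id //.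
  have : (c - 2^-1) ^+ 2 <= t0 ^+ 2.
    rewrite ler_pXn2r // ?nnegrE; lra.
  move=> H; have : c2 a phi h * (c - 2^-1) ^+ 2 <= c2 a phi h * t0 ^+ 2.
    by rewrite ler_pM2l.
  lra.
move=> ->; rewrite pmulr_llt0 // pmulr_llt0 // invr_gt0 //.
Qed.

Lemma pos_point {R : realType} (a phi h : R) : 0 < a < 1 -> 0 < phi < 1 -> 1 < h ->
  exists x1, [/\ 4^-1 * 3 <= x1, x1 < 1 & 0 < Lf a phi h x1].
Proof.
move=> /andP[a0 a1] hp hh.
set d := (4 * h)^-1.
have d0 : 0 < d by rewrite /d invr_gt0 mulr_gt0 //; lra.
have d1 : d <= 4^-1.
  rewrite /d lef_pV2 ?posrE ?mulr_gt0 //; lra.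
set e := d `^ a^-1.
have e0 : 0 < e by rewrite /e powR_gt0.
have e1 : e <= d.
  rewrite /e; apply: ge1r_powR; first by apply/andP; split => //; lra.
  by rewrite invf_ge1 //; lra.
have ea : e `^ a = d.
  by rewrite /e -powRrM mulVf ?gt_eqF // powRr1 // ltW.
exists (1 - e); split; [lra|lra|].
have hx : 0 < 1 - e < 1 by apply/andP; split; lra.
rewrite Lf_gt0_iff // opprB addrC subrK ea.
have hx' : 0 <= 1 - e <= 1 by apply/andP; split; lra.
have HA := Af_le phi h (1 - e) hp hh hx'; have HB := Bf_ge phi h (1 - e) hp hh hx'.
have HA0 := Af_gt0 phi h (1 - e) hp hh hx'.
have Hp : 1 - e <= (1 - e) `^ a.
  apply: ger1_powR; [apply/andP; split|]; lra.
have dh : d * h = 4^-1 by rewrite /d; field; lra.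
have : d * Af phi h (1 - e) <= 4^-1 by rewrite -dh ler_pM2l.
move=> H1.
have : 4^-1 * 3 <= (1 - e) `^ a * Bf phi h (1 - e).
  rewrite -[4^-1 * 3]mulr1; apply: ler_pM => //; lra.
have : (4:R)^-1 < 4^-1 * 3 by rewrite ltr_pMr ?invr_gt0 //; lra.
lra.
Qed.

Lemma exists_sol {R : realType} (a phi h : R) : 0 < a < 1 -> 0 < phi < 1 -> 1 < h ->
  c0 a phi h < 0 -> exists x, 2^-1 < x < 1 /\ Lf a phi h x = 0.
Proof.
move=> ha hp hh c0n.
have [x0 [x00 x01 Lx0]] := neg_point a phi h ha hp hh c0n.
have [x1 [x10 x11 Lx1]] := pos_point a phi h ha hp hh.
have h2 : (2:R)^-1 = 4^-1 * 2 by field.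
have h8 : (8:R)^-1 = 4^-1 * 2^-1 by field.
have h4 : (0:R) < 4^-1 by rewrite invr_gt0 ltr0n.
have h2' : (0:R) < 2^-1 by rewrite invr_gt0 ltr0n.
have lex : x0 <= x1 by lra.
have der : forall z, x0 <= z <= x1 -> is_derive z 1 (Lf a phi h) (dLf a phi h z).
  by move=> z /andP[? ?]; apply: is_derive_Lf => //; apply/andP; split; lra.
have [c cI Lc] := @IVT R (Lf a phi h) x0 x1 0 lex
  ltac:(apply: derivable_within_continuous => z;
        rewrite in_itv /= => /andP[pz zq];
        by case: (der z ltac:(apply/andP; split; lra)))
  ltac:(rewrite ge_min le_max; apply/andP; split; apply/orP; [left|right]; lra).
move: cI; rewrite in_itv /= => /andP[c0' c1'].
by exists c; split => //; apply/andP; split; lra.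
Qed.



Definition Core {R : realType} (b phi h x : R) :=
  x `^ (1 - b) * Bf phi h x = (1 - x) `^ (1 - b) * Af phi h x.

Lemma core_id {R : realType} (phi h x u v : R) : 0 < phi < 1 -> 1 < h ->
  DD phi h * (u * Bf phi h x - v * Af phi h x) =
  (h + 1) * ((u - v) - phi * (h - 1) * (x * v - (1 - x) * u)).
Proof.
move=> hp hh; have D0 := DD_gt0 phi h hp hh; move: D0.
rewrite /Bf /Af /Yf /DD => D0; field; by rewrite gt_eqF.
Qed.

Lemma gfun_core {R : realType} (b phi h x : R) : 0 < b < 1 -> 0 < phi < 1 -> 1 < h ->
  2^-1 < x < 1 -> (gfun x b = phi * (h - 1)) <-> Core b phi h x.
Proof.
move=> hb hp hh /andP[x0 x1].
have h2 : (0:R) < 2^-1 by rewrite invr_gt0 ltr0n.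
have xn : (x == 2^-1) = false by apply/negbTE; rewrite gt_eqF.
have k0 : 0 < phi * (h - 1) by case/andP: hp => p0 _; rewrite mulr_gt0 //; lra.
have D0 := DD_gt0 phi h hp hh.
set u := x `^ (1 - b); set v := (1 - x) `^ (1 - b).
have u0 : 0 < u by rewrite /u powR_gt0 //; lra.
have v0 : 0 < v by rewrite /v powR_gt0 //; lra.
have I := core_id phi h x u v hp hh.
rewrite /gfun xn -/u -/v /Core -/u -/v.
set den := x * v - (1 - x) * u.
split.
- have [d0|dn] := eqVneq den 0.
    by rewrite d0 invr0 mulr0 => E; move: k0; rewrite -E ltxx.
  move=> E; have E2 : u - v = phi * (h - 1) * den by rewrite -E mulrVK // unitfE.
  apply/eqP; rewrite -subr_eq0; apply/eqP.
  have : DD phi h * (u * Bf phi h x - v * Af phi h x) = 0 by rewrite I E2 subrr mulr0.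
  by move/eqP; rewrite mulf_eq0 (gt_eqF D0) /= => /eqP.
- move=> C.
  have E2 : u - v - phi * (h - 1) * den = 0.
    have : (h + 1) * (u - v - phi * (h - 1) * den) = 0 by rewrite -I C subrr mulr0.
    by move/eqP; rewrite mulf_eq0 gt_eqF /= => [/eqP //|]; lra.
  have dn : den != 0.
    apply/eqP => d0; move: E2; rewrite d0 mulr0 subr0 => /eqP; rewrite subr_eq0 => /eqP uv.
    move: d0; rewrite /den -uv => /eqP; rewrite -mulrBl mulf_eq0 (gt_eqF u0) orbF.
    by move/eqP; lra.
  have E3 : u - v = phi * (h - 1) * den by lra.
  by rewrite E3 mulfK.
Qed.

Lemma eq1_core {R : realType} (b phi h x : R) : 0 < b < 1 -> 0 < phi < 1 -> 1 < h ->
  0 < x < 1 ->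
  (x = x `^ b * Af phi h x / (x `^ b * Af phi h x + (1 - x) `^ b * Bf phi h x))
  <-> Core b phi h x.
Proof.
move=> /andP[b0 b1] hp hh /andP[x0 x1].
have hx : 0 <= x <= 1 by apply/andP; split; lra.
have HA := Af_gt0 phi h x hp hh hx; have HB := Bf_gt0 phi h x hp hh hx.
have x1' : 0 < 1 - x by lra.
set P := x `^ b; set Q := (1 - x) `^ b.
have P0 : 0 < P by rewrite /P powR_gt0.
have Q0 : 0 < Q by rewrite /Q powR_gt0.
have xE : x = P * x `^ (1 - b).
  rewrite /P -powRD; last by apply/implyP => _; rewrite gt_eqF.
  by rewrite [b + _]addrC subrK powRr1 // ltW.
have yE : 1 - x = Q * (1 - x) `^ (1 - b).
  rewrite /Q -powRD; last by apply/implyP => _; rewrite gt_eqF.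
  by rewrite [b + _]addrC subrK powRr1 // ltW.
rewrite /Core.
set u := x `^ (1 - b) in xE *; set v := (1 - x) `^ (1 - b) in yE *.
set A := Af phi h x in HA *; set B := Bf phi h x in HB *.
have S0 : 0 < P * A + Q * B by rewrite addr_gt0 // mulr_gt0.
have key : x * (P * A + Q * B) - P * A = P * Q * (u * B - v * A).
  have -> : x * (P * A + Q * B) - P * A = x * (Q * B) - (1 - x) * (P * A) by ring.
  rewrite {1}xE yE; ring.
split.
- move=> E; have : x * (P * A + Q * B) - P * A = 0.
    by rewrite {1}E mulfVK ?subrr // gt_eqF.
  rewrite key => /eqP; rewrite mulf_eq0 mulf_eq0 (gt_eqF P0) (gt_eqF Q0) /=.
  by rewrite subr_eq0 => /eqP.
- move=> C; have : x * (P * A + Q * B) - P * A = 0 by rewrite key C subrr mulr0.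
  move=> H; have H2 : x * (P * A + Q * B) = P * A by lra.
  by rewrite -{1}H2 mulfK // gt_eqF.
Qed.

Lemma eq2_Y {R : realType} (phi h x y : R) : 0 < phi < 1 -> 1 < h ->
  (y = phi * x + (1 - phi) / (h + 1) * (h * y + 1 - y)) <-> y = Yf phi h x.
Proof.
move=> hp hh; have D0 := DD_gt0 phi h hp hh.
have h1 : 0 < h + 1 by lra.
have I : y - (phi * x + (1 - phi) / (h + 1) * (h * y + 1 - y)) =
         (y - Yf phi h x) * DD phi h / (h + 1).
  move: D0; rewrite /Yf /DD => D0; field; rewrite !gt_eqF //.
split => E.
- have : (y - Yf phi h x) * DD phi h / (h + 1) = 0 by rewrite -I -E subrr.
  move/eqP; rewrite !mulf_eq0 invr_eq0 (gt_eqF D0) (gt_eqF h1) !orbF subr_eq0 => /eqP //.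
- apply/eqP; rewrite -subr_eq0 I E subrr !mul0r //.
Qed.



Lemma Sset_iff {R : realType} (phi hG : R) (p : R * R) :
  Sset phi hG p <-> (p = (2^-1, 2^-1) \/ p = (1, (phi * hG + 1) / (phi * hG + 2 - phi))).
Proof. by []. Qed.

Lemma Yf_sub_half {R : realType} (phi h x : R) : 0 < phi < 1 -> 1 < h ->
  Yf phi h x - 2^-1 = (x - 2^-1) * (phi * (h + 1) / DD phi h).
Proof.
move=> hp hh; have D0 := DD_gt0 phi h hp hh; move: D0.
rewrite /Yf /DD => D0; field; by rewrite gt_eqF.
Qed.

Lemma Yf_sub_x {R : realType} (phi h x : R) : 0 < phi < 1 -> 1 < h ->
  Yf phi h x - x = (2^-1 - x) * (2 * (1 - phi) / DD phi h).
Proof.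
move=> hp hh; have D0 := DD_gt0 phi h hp hh; move: D0.
rewrite /Yf /DD => D0; field; by rewrite gt_eqF.
Qed.

Lemma Yf_one {R : realType} (phi h : R) : 0 < phi < 1 -> 1 < h ->
  Yf phi h 1 = (phi * h + 1) / (phi * h + 2 - phi).
Proof.
move=> hp hh; have D0 := DD_gt0 phi h hp hh; move: D0.
rewrite /Yf /DD => D0; field; by rewrite gt_eqF.
Qed.

Lemma sol_char {R : realType} (b phi h x y : R) : 0 < b < 1 -> 0 < phi < 1 -> 1 < h ->
  solset b phi h (x, y) <->
  (y = Yf phi h x /\ (x = 2^-1 \/ x = 1 \/ (2^-1 < x < 1 /\ Core b phi h x))).
Proof.
move=> hb hp hh.
have D0 := DD_gt0 phi h hp hh.
have s1 : 0 < phi * (h + 1) / DD phi h.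
  by case/andP: hp => p0 _; rewrite divr_gt0 // mulr_gt0 //; lra.
have s2 : 0 < 2 * (1 - phi) / DD phi h.
  by case/andP: hp => _ p1; rewrite divr_gt0 // mulr_gt0 //; lra.
have I1 := Yf_sub_half phi h x hp hh; have I2 := Yf_sub_x phi h x hp hh.
have h2 : (0:R) < 2^-1 by rewrite invr_gt0 ltr0n.
have h21 : (2:R)^-1 < 1 by rewrite invf_lt1 // ltr1n.
split.
- case=> /= y1 yx x1 E1 E2.
  have Ey := (eq2_Y phi h x y hp hh).1 E2.
  split => //.
  move: y1 yx; rewrite Ey => y1 yx.
  have x0 : 2^-1 <= x.
    rewrite leNgt; apply/negP => xl.
    have : (x - 2^-1) * (phi * (h + 1) / DD phi h) < 0 by rewrite pmulr_llt0 // subr_lt0.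
    lra.
  case: (ltgtP x (2^-1)) => [|xg|xe]; [lra| |by left].
  case: (ltgtP x 1) => [xl||xe]; [|lra|by right; left].
  right; right; split; first by apply/andP.
  apply: (eq1_core b phi h x hb hp hh _).1; first by apply/andP; split; lra.
  by move: E1; rewrite Ey.
- case=> Ey Hx; rewrite /solset /=; subst y.
  have E2 : Yf phi h x = phi * x + (1 - phi) / (h + 1) * (h * Yf phi h x + 1 - Yf phi h x).
    by apply/(eq2_Y phi h x _ hp hh).
  case: Hx => [xe|[xe|[/andP[x0 x1] C]]].
  + subst x; split => //.
    * by rewrite Yf_half.
    * by rewrite Yf_half.
    * exact: ltW.
    * have hx : (0 < (2^-1 : R) < 1) by rewrite h2 h21.
      apply: (eq1_core b phi h _ hb hp hh hx).2.
      rewrite /Core; have -> : 1 - 2^-1 = 2^-1 :> R by field.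
      by rewrite /Af /Bf Yf_half //; congr (_ * _); field.
  + subst x; split => //.
    * have : 0 <= (1 - 2^-1) * (phi * (h + 1) / DD phi h) by rewrite mulr_ge0 // ?subr_ge0 ltW.
      lra.
    * have : 0 <= (1 - 2^-1) * (2 * (1 - phi) / DD phi h) by rewrite mulr_ge0 // ?subr_ge0 ltW.
      lra.
    * have b0 : b != 0 by case/andP: hb => b0 _; rewrite gt_eqF.
      rewrite powR1 subrr powR0 // mul1r mul0r addr0 divff //.
      by rewrite gt_eqF // Af_gt0 // ler01 lexx.
  + split => //.
    * have : 0 <= (x - 2^-1) * (phi * (h + 1) / DD phi h) by rewrite mulr_ge0 // ?subr_ge0 ltW.
      lra.
    * have : (2^-1 - x) * (2 * (1 - phi) / DD phi h) <= 0.
        by rewrite pmulr_lle0 // subr_le0 ltW.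
      lra.
    * exact: ltW.
    * apply: (eq1_core b phi h x hb hp hh _).2 => //; apply/andP; split; lra.
Qed.



Lemma core_Lf {R : realType} (b phi h x : R) : 0 < phi < 1 -> 1 < h -> 2^-1 < x < 1 ->
  Core b phi h x <-> Lf (1 - b) phi h x = 0.
Proof.
move=> hp hh /andP[x0 x1].
have h2 : (0:R) < 2^-1 by rewrite invr_gt0 ltr0n.
have hx : 0 < x < 1 by apply/andP; split; lra.
by rewrite (Lf0_iff (1 - b) phi h x hp hh hx).
Qed.

Lemma xhat_spec {R : realType} (b phi h : R) : 0 < b < 1 -> 0 < phi < 1 -> 1 < h ->
  2 / (phi * (h - 1) + 2) < b ->
  (2^-1 < xhat phi h b < 1 /\ Core b phi h (xhat phi h b)) /\
  (forall x, 2^-1 < x < 1 -> Core b phi h x -> x = xhat phi h b).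
Proof.
move=> hb hp hh hlt.
have ha : 0 < 1 - b < 1 by case/andP: hb => b0 b1; apply/andP; split; lra.
have c0n : c0 (1 - b) phi h < 0.
  by rewrite ltNge (c0_sign (1 - b) b phi h erefl hp hh) -ltNge.
have [s [sI Ls]] := exists_sol (1 - b) phi h ha hp hh c0n.
have uq : forall x, 2^-1 < x < 1 -> Core b phi h x -> x = s.
  move=> x xI Cx; apply: (uniq_sol (1 - b) phi h x s ha hp hh xI sI) => //.
  exact/(core_Lf b phi h x hp hh xI).
have Cs : Core b phi h s by apply/(core_Lf b phi h s hp hh sI).
have -> : xhat phi h b = s.
  rewrite /xhat; apply: xget_unique.
    by split => //; apply/(gfun_core b phi h s hb hp hh sI).
  move=> y [yI gy]; apply: uq => //.
  exact/(gfun_core b phi h y hb hp hh yI).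
by split => //.
Qed.

Theorem lemmaB3 (R : realType) (b phi hG : R) :
  0 < b < 1 -> 0 < phi < 1 -> 1 < hG ->
  (b <= 2 / (phi * (hG - 1) + 2) -> solset b phi hG = Sset phi hG) /\
  (2 / (phi * (hG - 1) + 2) < b ->
     solset b phi hG =
       Sset phi hG `|`
       [set (xhat phi hG b,
             (phi * (hG + 1) * xhat phi hG b + 1 - phi) / (phi * hG + 2 - phi))]).
Proof.
move=> hb hp hh.
have ha : 0 < 1 - b < 1 by case/andP: hb => b0 b1; apply/andP; split; lra.
have Y1 := Yf_one phi hG hp hh.
have Yh := Yf_half phi hG hp hh.
split => hthr; apply/funext => -[x y]; apply/propext;
  rewrite (sol_char b phi hG x y hb hp hh).
- have c0p : 0 <= c0 (1 - b) phi hG by rewrite (c0_sign (1 - b) b phi hG erefl hp hh).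
  rewrite Sset_iff; split.
  + case=> -> [->|[->|[xI C]]].
    * by left; rewrite Yh.
    * by right; rewrite Y1.
    * exfalso; apply: (no_sol (1 - b) phi hG x ha hp hh c0p xI).
      exact/(core_Lf b phi hG x hp hh xI).
  + case=> -[-> ->]; split.
    * by rewrite Yh.
    * by left.
    * by rewrite Y1.
    * by right; left.
- have [[xI C] uq] := xhat_spec b phi hG hb hp hh hthr.
  split.
  + case=> -> [->|[->|[xI' C']]].
    * by left; left; rewrite Yh.
    * by left; right; rewrite Y1.
    * by right; rewrite (uq x xI' C').
  + case=> [/Sset_iff [] [-> ->]|[-> ->]].
    * by split; [rewrite Yh | left].
    * by split; [rewrite Y1 | right; left].
    * by split; [| right; right].
Qed.
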